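(* For complex $a,c$ with $|ac/q|<1$, \begin{align*} \frac{\bigl(q^2, ac; q^2\bigr)_\infty}{\bigl(q^2 a, q^2 c; q^2\bigr)_\infty}\sum_{n=0}^\infty \frac{\bigl(q^2/a, q^2/c; q^2\bigr)_n (ac/q)^n}{(q; q)_{2n} \bigl(1+q^{2n+1}\bigr)} =\sum_{n=0}^\infty \sum_{j=-n}^n \bigl(1-q^{2n+1}\bigr) q^{n^2-j^2-j}\frac{\bigl(q^2/a, q^2/c; q^2\bigr)_n (ac)^n}{\bigl(q^2 a, q^2 c; q^2\bigr)_n}. \end{align*}
   Context: Throughout, $q$ is a complex number with $0<|q|<1$. For $x\in\mathbb{C}$ and base $p\in\{q,q^2\}$, $(x;p)_\infty=\prod_{k=0}^\infty(1-xp^k)$ and, for an integer $n\ge 0$, $(x;p)_n=\prod_{k=0}^{n-1}(1-xp^k)$; also $(x_1,\dots,x_m;p)_n=(x_1;p)_n\cdots(x_m;p)_n$ for $n$ an integer or $\infty$. *)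

(* Defs.v *)
From Stdlib Require Import Reals ZArith.
From Coquelicot Require Import Coquelicot.
Open Scope C_scope.

Fixpoint qpoch (x p : C) (n : nat) : C :=
  match n with
  | O => 1
  | S m => qpoch x p m * (1 - x * Cpow p m)
  end.

Definition qpinf (x p : C) : C :=
  (real (Lim_seq (fun n => Re (qpoch x p n))),
   real (Lim_seq (fun n => Im (qpoch x p n)))).

Definition zpow (z : C) (k : Z) : C :=
  match k with
  | Z0 => 1
  | Zpos m => Cpow z (Pos.to_nat m)
  | Zneg m => / Cpow z (Pos.to_nat m)
  end.

Definition lhs_term (q a c : C) (n : nat) : C :=
  qpoch (q^2 / a) (q^2) n * qpoch (q^2 / c) (q^2) n * Cpow (a * c / q) n
  / (qpoch q q (2 * n) * (1 + Cpow q (2 * n + 1))).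

Definition rhs_term (q a c : C) (n : nat) : C :=
  sum_n (fun k =>
     let j := (Z.of_nat k - Z.of_nat n)%Z in
     (1 - Cpow q (2 * n + 1)) * zpow q (Z.of_nat n * Z.of_nat n - j * j - j)%Z
     * qpoch (q^2 / a) (q^2) n * qpoch (q^2 / c) (q^2) n * Cpow (a * c) n
     / (qpoch (q^2 * a) (q^2) n * qpoch (q^2 * c) (q^2) n)) (2 * n).

(* Main.v *)
Require Import Defs.
From Stdlib Require Import Reals ZArith Lia Lra.
From Coquelicot Require Import Coquelicot.
Open Scope C_scope.

Lemma Cplus_eq (x y : C) : plus x y = x + y. Proof. reflexivity. Qed.
Lemma Cmult_eq (x y : C) : mult x y = x * y. Proof. reflexivity. Qed.
Lemma Copp_eq (x : C) : opp x = - x. Proof. reflexivity. Qed.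
Lemma Cminus_eq (x y : C) : minus x y = x - y. Proof. reflexivity. Qed.
Lemma Czero_eq : (zero : C) = 0. Proof. reflexivity. Qed.

Definition cv (u : nat -> C) (l : C) := is_lim_seq (fun n => Cmod (u n - l)) 0%R.

Definition climit (u : nat -> C) : C :=
  (real (Lim_seq (fun n => Re (u n))), real (Lim_seq (fun n => Im (u n)))).

Lemma Cmod_le_ReIm (x : C) : (Cmod x <= Rabs (Re x) + Rabs (Im x))%R.
Proof.
  destruct x as [x y]; unfold Cmod; simpl.
  pose proof (Rabs_pos x); pose proof (Rabs_pos y).
  rewrite <- (sqrt_Rsqr (Rabs x + Rabs y)) by lra.
  apply sqrt_le_1_alt. unfold Rsqr.
  assert (Hx : (x * x = Rabs x * Rabs x)%R) by (rewrite <- Rabs_mult, Rabs_right; nra).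
  assert (Hy : (y * y = Rabs y * Rabs y)%R) by (rewrite <- Rabs_mult, Rabs_right; nra).
  nra.
Qed.

Lemma Im_le_Cmod (x : C) : (Rabs (Im x) <= Cmod x)%R.
Proof.
  destruct x as [x y]; unfold Cmod; simpl.
  rewrite <- sqrt_Rsqr_abs. apply sqrt_le_1_alt. unfold Rsqr. nra.
Qed.

Lemma re_minus (x y : C) : Re (x - y) = (Re x - Re y)%R.
Proof. unfold Cminus. rewrite re_plus, re_opp. ring. Qed.
Lemma im_minus (x y : C) : Im (x - y) = (Im x - Im y)%R.
Proof. unfold Cminus. rewrite im_plus, im_opp. ring. Qed.

Lemma cv_Re u l : cv u l -> is_lim_seq (fun n => Re (u n)) (Re l).
Proof.
  intro H. apply is_lim_seq_spec. apply is_lim_seq_spec in H.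
  intro eps. destruct (H eps) as [N HN]. exists N. intros n Hn.
  specialize (HN n Hn). rewrite Rminus_0_r, Rabs_right in HN by (apply Rle_ge, Cmod_ge_0).
  eapply Rle_lt_trans; [|exact HN].
  replace (Re (u n) - Re l)%R with (Re (u n - l)) by apply re_minus.
  apply re_le_Cmod.
Qed.

Lemma cv_Im u l : cv u l -> is_lim_seq (fun n => Im (u n)) (Im l).
Proof.
  intro H. apply is_lim_seq_spec. apply is_lim_seq_spec in H.
  intro eps. destruct (H eps) as [N HN]. exists N. intros n Hn.
  specialize (HN n Hn). rewrite Rminus_0_r, Rabs_right in HN by (apply Rle_ge, Cmod_ge_0).
  eapply Rle_lt_trans; [|exact HN].
  replace (Im (u n) - Im l)%R with (Im (u n - l)) by apply im_minus.
  apply Im_le_Cmod.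
Qed.

Lemma lim_abs_minus (v : nat -> R) (l : R) : is_lim_seq v l ->
  is_lim_seq (fun n => Rabs (v n - l)) 0%R.
Proof.
  intro H. replace (Finite 0) with (Rbar_abs (Rbar_minus l l)).
  apply is_lim_seq_abs. apply is_lim_seq_minus'; [exact H | apply is_lim_seq_const].
  simpl. f_equal. rewrite <- Rabs_R0. f_equal. ring.
Qed.

Lemma cv_of_ReIm u l : is_lim_seq (fun n => Re (u n)) (Re l) ->
  is_lim_seq (fun n => Im (u n)) (Im l) -> cv u l.
Proof.
  intros H1 H2. unfold cv.
  apply is_lim_seq_le_le with (u := fun _ => 0%R)
    (w := fun n => (Rabs (Re (u n) - Re l) + Rabs (Im (u n) - Im l))%R).
  - intro n. split. apply Cmod_ge_0.
    eapply Rle_trans; [apply Cmod_le_ReIm|]. rewrite re_minus, im_minus. lra.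
  - apply is_lim_seq_const.
  - replace 0%R with (0+0)%R by ring.
    apply is_lim_seq_plus'; apply lim_abs_minus; assumption.
Qed.

Lemma climit_cv u l : cv u l -> climit u = l.
Proof.
  intro H. unfold climit.
  rewrite (is_lim_seq_unique _ _ (cv_Re u l H)).
  rewrite (is_lim_seq_unique _ _ (cv_Im u l H)).
  simpl. destruct l; reflexivity.
Qed.

Lemma cv_unique u l l' : cv u l -> cv u l' -> l = l'.
Proof. intros H H'. rewrite <- (climit_cv u l H). apply climit_cv, H'. Qed.

Lemma cv_ext u v l : (forall n, u n = v n) -> cv u l -> cv v l.
Proof. intros E H. unfold cv. eapply is_lim_seq_ext; [|exact H]. intro n; simpl; rewrite E; reflexivity. Qed.

Lemma cv_const l : cv (fun _ => l) l.
Proof. unfold cv. eapply is_lim_seq_ext; [|apply is_lim_seq_const]. intro n; simpl.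
  replace (l - l) with (RtoC 0). rewrite Cmod_0. reflexivity.
  unfold Cminus; rewrite Cplus_opp_r; reflexivity. Qed.

Lemma cv_mult u v l m : cv u l -> cv v m -> cv (fun n => u n * v n) (l * m).
Proof.
  intros Hu Hv. apply cv_of_ReIm.
  - rewrite re_mult. eapply is_lim_seq_ext.
    intro n. symmetry. apply re_mult.
    apply is_lim_seq_minus'; apply is_lim_seq_mult'; auto using cv_Re, cv_Im.
  - rewrite im_mult. eapply is_lim_seq_ext.
    intro n. symmetry. apply im_mult.
    apply is_lim_seq_plus'; apply is_lim_seq_mult'; auto using cv_Re, cv_Im.
Qed.

Lemma cv_plus u v l m : cv u l -> cv v m -> cv (fun n => u n + v n) (l + m).
Proof.
  intros Hu Hv. apply cv_of_ReIm.
  - rewrite re_plus. eapply is_lim_seq_ext.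
    intro n. symmetry. apply re_plus.
    apply is_lim_seq_plus'; auto using cv_Re.
  - rewrite im_plus. eapply is_lim_seq_ext.
    intro n. symmetry. apply im_plus.
    apply is_lim_seq_plus'; auto using cv_Im.
Qed.

Lemma cv_shift u l k : cv (fun n => u (n + k)%nat) l -> cv u l.
Proof. intro H. unfold cv. apply (is_lim_seq_incr_n _ k). exact H. Qed.

Lemma cv_shift' u l k : cv u l -> cv (fun n => u (n + k)%nat) l.
Proof. intro H. unfold cv. apply (is_lim_seq_incr_n _ k) in H. exact H. Qed.

Lemma cv_bound u l (e : nat -> R) : is_lim_seq e 0%R ->
  eventually (fun n => Cmod (u n - l) <= e n)%R -> cv u l.
Proof.
  intros He Hb. unfold cv. apply is_lim_seq_le_le_loc with (u := fun _ => 0%R) (w := e).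
  - destruct Hb as [N HN]. exists N. intros n Hn. split. apply Cmod_ge_0. apply HN, Hn.
  - apply is_lim_seq_const.
  - exact He.
Qed.

Lemma cv_Cmod u l : cv u l -> is_lim_seq (fun n => Cmod (u n)) (Cmod l).
Proof.
  intro H. apply is_lim_seq_le_le with (u := fun n => (Cmod l - Cmod (u n - l))%R)
    (w := fun n => (Cmod l + Cmod (u n - l))%R).
  - intro n. split.
    + pose proof (Cmod_triangle (u n) (l - u n)).
      replace (u n + (l - u n)) with l in H0 by ring.
      replace (l - u n) with (- (u n - l)) in H0 by ring. rewrite Cmod_opp in H0. lra.
    + pose proof (Cmod_triangle l (u n - l)).
      replace (l + (u n - l)) with (u n) in H0 by ring. lra.
  - replace (Finite (Cmod l)) with (Rbar_minus (Cmod l) 0%R) by (simpl; f_equal; ring).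
    apply is_lim_seq_minus'. apply is_lim_seq_const. exact H.
  - replace (Finite (Cmod l)) with (Rbar_plus (Cmod l) 0%R) by (simpl; f_equal; ring).
    apply is_lim_seq_plus'. apply is_lim_seq_const. exact H.
Qed.

Lemma series_cv (a : nat -> C) l : is_series a l -> cv (sum_n a) l.
Proof.
  intro H. unfold cv. apply is_lim_seq_spec. intro eps.
  assert (Hf : (0 < norm_factor (K := C_AbsRing) (V := C_NormedModule))%R) by apply norm_factor_gt_0.
  assert (He : (0 < eps / norm_factor (K := C_AbsRing) (V := C_NormedModule))%R)
    by (apply Rdiv_lt_0_compat; [apply cond_pos | exact Hf]).
  destruct (H _ (locally_ball l (mkposreal _ He))) as [N HN].
  exists N. intros n Hn. specialize (HN n Hn).
  apply norm_compat2 in HN. simpl in HN.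
  rewrite Rminus_0_r, Rabs_right by (apply Rle_ge, Cmod_ge_0).
  change (Cmod (sum_n a n - l)) with (norm (K:=C_AbsRing) (V:=C_NormedModule) (minus (sum_n a n) l)).
  replace (pos eps) with (norm_factor (K := C_AbsRing) (V := C_NormedModule) * (eps / norm_factor (K := C_AbsRing) (V := C_NormedModule)))%R.
  exact HN. field. lra.
Qed.

Lemma cv_series (a : nat -> C) l : cv (sum_n a) l -> is_series a l.
Proof.
  intro H. unfold is_series. apply filterlim_locally. intro eps.
  unfold cv in H. apply is_lim_seq_spec in H. destruct (H eps) as [N HN].
  exists N. intros n Hn. apply norm_compat1. specialize (HN n Hn).
  rewrite Rminus_0_r, Rabs_right in HN by (apply Rle_ge, Cmod_ge_0).
  change (norm (K:=C_AbsRing) (V:=C_NormedModule) (minus (sum_n a n) l)) with (Cmod (sum_n a n - l)). exact HN.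
Qed.


Lemma sum_n_C_S (a : nat -> C) n : sum_n a (S n) = sum_n a n + a (S n).
Proof. rewrite sum_Sn. reflexivity. Qed.
Lemma sum_n_C_0 (a : nat -> C) : sum_n a 0 = a 0%nat.
Proof. apply sum_O. Qed.
Lemma sum_n_R_S (a : nat -> R) n : sum_n a (S n) = (sum_n a n + a (S n))%R.
Proof. rewrite sum_Sn. reflexivity. Qed.

Lemma Cmod_sum_le (a : nat -> C) n : (Cmod (sum_n a n) <= sum_n (fun k => Cmod (a k)) n)%R.
Proof.
  induction n.
  - rewrite sum_n_C_0, sum_O. lra.
  - rewrite sum_n_C_S, sum_n_R_S. eapply Rle_trans. apply Cmod_triangle. lra.
Qed.

Lemma sum_n_R_le (a b : nat -> R) n : (forall k, a k <= b k)%R -> (sum_n a n <= sum_n b n)%R.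
Proof.
  intro H. induction n.
  - rewrite !sum_O. apply H.
  - rewrite !sum_n_R_S. specialize (H (S n)). lra.
Qed.

Lemma ex_series_maj (a : nat -> C) (b : nat -> R) :
  (forall n, Cmod (a n) <= b n)%R -> ex_series b -> exists l, is_series a l.
Proof.
  intros H Hb.
  assert (E : ex_series (K := C_AbsRing) (V := C_CompleteNormedModule) a).
  { apply ex_series_le with b; [|exact Hb]. intro n. apply H. }
  exact E.
Qed.

Lemma series_norm_le (a : nat -> C) (b : nat -> R) l lb :
  is_series a l -> (forall n, Cmod (a n) <= b n)%R -> is_series b lb -> (Cmod l <= lb)%R.
Proof.
  intros Ha H Hb.
  apply series_cv, cv_Cmod in Ha.
  assert (Hb' : is_lim_seq (sum_n b) lb) by exact Hb.
  assert (Rbar_le (Cmod l) lb).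
  { eapply is_lim_seq_le; [|exact Ha|exact Hb'].
    intro n. eapply Rle_trans. apply Cmod_sum_le. apply sum_n_R_le. exact H. }
  exact H0.
Qed.

Lemma is_series_geomK (K t : R) : (0 <= t < 1)%R ->
  is_series (fun n => K * t ^ n)%R (K / (1 - t))%R.
Proof.
  intro Ht. unfold Rdiv. apply (is_series_scal_l (K := R_AbsRing) (V := R_NormedModule) K (fun n => t ^ n)%R).
  apply is_series_geom. rewrite Rabs_right; lra.
Qed.

Lemma ex_series_geomK (K t : R) : (0 <= t < 1)%R -> ex_series (fun n => K * t ^ n)%R.
Proof. intro Ht. eexists. apply is_series_geomK, Ht. Qed.

Lemma series_unique (a : nat -> C) l l' : is_series a l -> is_series a l' -> l = l'.
Proof. intros H H'. eapply cv_unique; apply series_cv; eassumption. Qed.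

Lemma series_plus (a b : nat -> C) la lb : is_series a la -> is_series b lb ->
  is_series (fun n => a n + b n) (la + lb).
Proof. intros Ha Hb. exact (is_series_plus a b la lb Ha Hb). Qed.

Lemma series_scal (c : C) (a : nat -> C) l : is_series a l -> is_series (fun n => c * a n) (c * l).
Proof. intro H. exact (is_series_scal_l (K := C_AbsRing) (V := C_NormedModule) c a l H). Qed.

Lemma series_ext (a b : nat -> C) l : (forall n, a n = b n) -> is_series a l -> is_series b l.
Proof. intros E H. exact (is_series_ext a b l E H). Qed.

Lemma series_minus (a b : nat -> C) la lb : is_series a la -> is_series b lb ->
  is_series (fun n => a n - b n) (la - lb).
Proof. intros Ha Hb. exact (is_series_minus a b la lb Ha Hb). Qed.

Lemma series_tail (a : nat -> C) (l : C) M : is_series a l ->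
  is_series (fun m => a (S M + m)%nat) (l - sum_n a M).
Proof.
  intro H. apply (is_series_incr_n a (S M) (l - sum_n a M)). lia.
  simpl. assert (E : l = (l - sum_n a M) + sum_n a M) by ring.
  rewrite E in H. exact H.
Qed.

Lemma series_term0 (a : nat -> C) (l : C) : is_series a l -> cv a 0.
Proof.
  intro H. apply series_cv in H.
  apply cv_shift with 1%nat.
  assert (H1 : cv (fun n => sum_n a (n + 1)%nat) l) by (apply cv_shift'; exact H).
  assert (H2 : cv (fun n => sum_n a (n + 1)%nat + - sum_n a n) (l + - l)).
  { apply cv_plus. exact H1. unfold cv in *. eapply is_lim_seq_ext; [|exact H].
    intro n. simpl. replace (- sum_n a n - - l) with (-(sum_n a n - l)) by ring.
    rewrite Cmod_opp. reflexivity. }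
  replace (l + - l) with (RtoC 0) in H2 by ring.
  eapply cv_ext; [|exact H2]. intro n. simpl.
  rewrite Nat.add_1_r, sum_n_C_S. ring.
Qed.


Lemma qpoch_S x p n : qpoch x p (S n) = qpoch x p n * (1 - x * Cpow p n).
Proof. reflexivity. Qed.

Lemma qpoch_split x p r m : qpoch x p (r + m) = qpoch x p r * qpoch (x * Cpow p r) p m.
Proof.
  induction m.
  - rewrite Nat.add_0_r. simpl. ring.
  - rewrite Nat.add_succ_r, !qpoch_S, IHm, Cpow_add_r. ring.
Qed.

Lemma qpoch_S' x p n : qpoch x p (S n) = (1 - x) * qpoch (x * p) p n.
Proof.
  change (S n) with (1 + n)%nat. rewrite qpoch_split. simpl. f_equal. ring.
  f_equal. ring.
Qed.

Lemma Cmod_1_minus_le w : (Cmod (1 - w) <= 1 + Cmod w)%R.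
Proof. eapply Rle_trans. apply Cmod_triangle. rewrite Cmod_opp, Cmod_1. lra. Qed.

Lemma Cmod_1_minus_ge w : (1 - Cmod w <= Cmod (1 - w))%R.
Proof.
  pose proof (Cmod_triangle (1 - w) w). replace (1 - w + w) with (RtoC 1) in H by ring.
  rewrite Cmod_1 in H. lra.
Qed.

Lemma pow_le_1 (t : R) n : (0 <= t <= 1)%R -> (0 <= t ^ n <= 1)%R.
Proof.
  intro H. induction n; simpl; nra.
Qed.

Lemma qp_upper x p n : (Cmod p < 1)%R ->
  (Cmod (qpoch x p n) <= exp (Cmod x / (1 - Cmod p)))%R.
Proof.
  intro Hp. pose proof (Cmod_ge_0 p) as Hp0. pose proof (Cmod_ge_0 x) as Hx0.
  assert (Hd : (0 < 1 - Cmod p)%R) by lra.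
  assert (H : forall n, (Cmod (qpoch x p n) <= exp (Cmod x * (1 - Cmod p ^ n) / (1 - Cmod p)))%R).
  { induction n0.
    - simpl. rewrite Cmod_1. replace (Cmod x * (1 - 1) / (1 - Cmod p))%R with 0%R by (field; lra).
      rewrite exp_0. lra.
    - rewrite qpoch_S, Cmod_mult.
      replace (Cmod x * (1 - Cmod p ^ S n0) / (1 - Cmod p))%R
        with (Cmod x * (1 - Cmod p ^ n0) / (1 - Cmod p) + Cmod x * Cmod p ^ n0)%R
        by (simpl; field; lra).
      rewrite exp_plus.
      apply Rmult_le_compat. apply Cmod_ge_0. apply Cmod_ge_0. exact IHn0.
      eapply Rle_trans. apply Cmod_1_minus_le. rewrite Cmod_mult, Cmod_pow.
      apply exp_ineq1_le. }
  eapply Rle_trans. apply H.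
  assert (Hpn := pow_le_1 (Cmod p) n ltac:(lra)).
  destruct (Req_dec (Cmod x * (1 - Cmod p ^ n) / (1 - Cmod p)) (Cmod x / (1 - Cmod p))) as [E|E].
  rewrite E; lra.
  left. apply exp_increasing.
  apply Rmult_lt_reg_r with (1 - Cmod p)%R. lra.
  unfold Rdiv. rewrite !Rmult_assoc, !Rinv_l by lra.
  assert (Cmod x * (1 - Cmod p ^ n) <> Cmod x)%R.
  { intro E'. apply E. rewrite E'. reflexivity. }
  nra.
Qed.

Lemma qp_lower_half y p n : (Cmod p < 1)%R -> (Cmod y <= (1 - Cmod p) / 2)%R ->
  (/2 <= Cmod (qpoch y p n))%R.
Proof.
  intros Hp Hy. pose proof (Cmod_ge_0 p) as Hp0. pose proof (Cmod_ge_0 y) as Hy0.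
  assert (Hd : (0 < 1 - Cmod p)%R) by lra.
  assert (H : forall n, (1 - Cmod y * (1 - Cmod p ^ n) / (1 - Cmod p) <= Cmod (qpoch y p n))%R).
  { induction n0.
    - simpl. rewrite Cmod_1. replace (Cmod y * (1 - 1) / (1 - Cmod p))%R with 0%R by (field; lra). lra.
    - rewrite qpoch_S, Cmod_mult.
      set (P := (Cmod p ^ n0)%R) in *.
      assert (HP := pow_le_1 (Cmod p) n0 ltac:(lra)). fold P in HP.
      set (u := (Cmod y * (1 - P) / (1 - Cmod p))%R) in *.
      assert (Hu : (0 <= u <= 1/2)%R).
      { unfold u. split. apply Rmult_le_pos. nra. left; apply Rinv_0_lt_compat; lra.
        apply Rmult_le_reg_r with (1 - Cmod p)%R. lra. unfold Rdiv.
        rewrite Rmult_assoc, Rinv_l by lra. nra. }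
      replace (Cmod y * (1 - Cmod p ^ S n0) / (1 - Cmod p))%R with (u + Cmod y * P)%R
        by (unfold u, P; simpl; field; lra).
      assert (H1 := Cmod_1_minus_ge (y * Cpow p n0)). rewrite Cmod_mult, Cmod_pow in H1. fold P in H1.
      assert (Hy1 : (Cmod y <= 1/2)%R) by lra.
      assert (0 <= 1 - Cmod y * P)%R by nra.
      assert ((1 - u) * (1 - Cmod y * P) <= Cmod (qpoch y p n0) * Cmod (1 - y * Cpow p n0))%R.
      { apply Rmult_le_compat; try lra. }
      assert (0 <= u * (Cmod y * P))%R by (apply Rmult_le_pos; nra).
      nra. }
  eapply Rle_trans; [|apply H].
  assert (HP := pow_le_1 (Cmod p) n ltac:(lra)).
  apply Rmult_le_reg_r with (1 - Cmod p)%R. lra.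
  unfold Rdiv. rewrite Rmult_minus_distr_r, Rmult_assoc, Rmult_assoc, Rinv_l by lra.
  nra.
Qed.

Lemma qp_nz_small x p n : (Cmod x < 1)%R -> (Cmod p < 1)%R -> qpoch x p n <> 0.
Proof.
  intros Hx Hp. induction n.
  - simpl. apply C1_nz.
  - rewrite qpoch_S. apply Cmult_neq_0. exact IHn.
    intro E. assert (Cmod (1 - x * Cpow p n) = 0%R) by (rewrite E; apply Cmod_0).
    pose proof (Cmod_1_minus_ge (x * Cpow p n)). rewrite Cmod_mult, Cmod_pow in H0.
    pose proof (pow_le_1 (Cmod p) n ltac:(pose proof (Cmod_ge_0 p); lra)).
    pose proof (Cmod_ge_0 x). nra.
Qed.


Lemma fin_min (f : nat -> R) : (forall n, 0 < f n)%R ->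
  forall M, exists L, (0 < L)%R /\ forall n, (n <= M)%nat -> (L <= f n)%R.
Proof.
  intros Hf M. induction M.
  - exists (f 0%nat). split. apply Hf. intros n Hn. replace n with 0%nat by lia. lra.
  - destruct IHM as [L [HL H]]. exists (Rmin L (f (S M))). split.
    apply Rmin_pos; auto.
    intros n Hn. destruct (Nat.eq_dec n (S M)) as [->|Hne].
    apply Rmin_r. eapply Rle_trans. apply Rmin_l. apply H. lia.
Qed.

Lemma small_pow_exists (t e : R) : (0 <= t < 1)%R -> (0 < e)%R ->
  exists M, forall n, (M <= n)%nat -> (t ^ n < e)%R.
Proof.
  intros Ht He. destruct (pow_lt_1_zero t ltac:(rewrite Rabs_right; lra) e He) as [M HM].
  exists M. intros n Hn. specialize (HM n Hn). rewrite Rabs_right in HM. exact HM.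
  apply Rle_ge, pow_le. lra.
Qed.

Lemma qp_lower x p : (Cmod p < 1)%R -> (forall n, qpoch x p n <> 0) ->
  exists L, (0 < L)%R /\ forall n, (L <= Cmod (qpoch x p n))%R.
Proof.
  intros Hp Hnz. pose proof (Cmod_ge_0 p) as Hp0. pose proof (Cmod_ge_0 x) as Hx0.
  destruct (small_pow_exists (Cmod p) ((1 - Cmod p) / 2 / (Cmod x + 1)) ltac:(lra)) as [M HM].
  { apply Rdiv_lt_0_compat; lra. }
  destruct (fin_min (fun n => Cmod (qpoch x p n))) with (M := M) as [L0 [HL0 H0]].
  { intro n. apply Cmod_gt_0, Hnz. }
  assert (HM0 : (0 < Cmod (qpoch x p M))%R) by (apply Cmod_gt_0, Hnz).
  exists (Rmin L0 (Cmod (qpoch x p M) / 2)). split. apply Rmin_pos; lra.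
  intro n. destruct (le_lt_dec n M) as [Hn|Hn].
  - eapply Rle_trans. apply Rmin_l. apply H0, Hn.
  - eapply Rle_trans. apply Rmin_r.
    replace n with (M + (n - M))%nat by lia. rewrite qpoch_split, Cmod_mult.
    assert (/2 <= Cmod (qpoch (x * Cpow p M) p (n - M)))%R.
    { apply qp_lower_half. exact Hp. rewrite Cmod_mult, Cmod_pow.
      specialize (HM M (le_n M)).
      assert (Cmod p ^ M * (Cmod x + 1) < (1 - Cmod p) / 2)%R.
      { apply Rmult_lt_reg_r with (/ (Cmod x + 1))%R. apply Rinv_0_lt_compat; lra.
        rewrite Rmult_assoc, Rinv_r by lra. lra. }
      assert (0 <= Cmod p ^ M)%R by (apply pow_le; lra). nra. }
    nra.
Qed.

Lemma qp_cv x p : (Cmod p < 1)%R -> cv (qpoch x p) (qpinf x p).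
Proof.
  intro Hp. pose proof (Cmod_ge_0 p) as Hp0.
  set (d := fun k => qpoch x p (S k) - qpoch x p k).
  assert (Hd : forall k, (Cmod (d k) <= exp (Cmod x / (1 - Cmod p)) * Cmod x * Cmod p ^ k)%R).
  { intro k. unfold d. rewrite qpoch_S.
    replace (qpoch x p k * (1 - x * Cpow p k) - qpoch x p k) with (- (qpoch x p k * x * Cpow p k)) by ring.
    rewrite Cmod_opp, !Cmod_mult, Cmod_pow.
    apply Rmult_le_compat_r. apply pow_le, Cmod_ge_0.
    apply Rmult_le_compat_r. apply Cmod_ge_0. apply qp_upper, Hp. }
  destruct (ex_series_maj d _ Hd) as [l Hl].
  { apply ex_series_geomK. lra. }
  assert (Hs : forall n, @eq C (sum_n d n) (qpoch x p (S n) - 1)).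
  { induction n. rewrite sum_n_C_0. unfold d. simpl. ring.
    rewrite sum_n_C_S, IHn. unfold d. ring. }
  apply series_cv in Hl.
  assert (H1 : cv (qpoch x p) (l + 1)).
  { apply cv_shift with 1%nat.
    apply (cv_ext (fun n => sum_n d n + 1)). intro n. rewrite Hs, Nat.add_1_r. ring.
    apply cv_plus. exact Hl. apply cv_const. }
  replace (qpinf x p) with (l + 1). exact H1.
  symmetry. apply climit_cv, H1.
Qed.

Lemma qpinf_split x p r : (Cmod p < 1)%R ->
  qpinf x p = qpoch x p r * qpinf (x * Cpow p r) p.
Proof.
  intro Hp. eapply cv_unique.
  apply cv_shift' with (k := r). apply qp_cv, Hp.
  apply (cv_ext (fun m => qpoch x p r * qpoch (x * Cpow p r) p m)).
  intro m. rewrite Nat.add_comm, qpoch_split. reflexivity.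
  apply cv_mult. apply cv_const. apply qp_cv, Hp.
Qed.

Lemma qpinf_nz x p : (Cmod p < 1)%R -> (forall n, qpoch x p n <> 0) -> qpinf x p <> 0.
Proof.
  intros Hp Hnz. destruct (qp_lower x p Hp Hnz) as [L [HL H]].
  assert (Rbar_le L (Cmod (qpinf x p))).
  { eapply is_lim_seq_le; [exact H | apply is_lim_seq_const | apply cv_Cmod, qp_cv, Hp]. }
  simpl in H0. intro E. rewrite E, Cmod_0 in H0. lra.
Qed.


Definition tG (A B p Cc : C) (n : nat) : C :=
  qpoch A p n * qpoch B p n / (qpoch p p n * qpoch Cc p n) * Cpow (Cc / (A * B)) n.

Lemma frac_bound (a b c d A' B' l m : R) : (0 <= a <= A')%R -> (0 <= b <= B')%R ->
  (0 < l <= c)%R -> (0 < m <= d)%R -> (a * b / (c * d) <= A' * B' / (l * m))%R.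
Proof.
  intros Ha Hb Hc Hd. unfold Rdiv.
  apply Rmult_le_compat. nra. left; apply Rinv_0_lt_compat; nra. nra.
  apply Rinv_le_contravar. nra. nra.
Qed.

Lemma cv_pow0 (p : C) : (Cmod p < 1)%R -> cv (Cpow p) 0.
Proof.
  intro Hp. apply cv_bound with (e := fun n => (Cmod p ^ n)%R).
  apply is_lim_seq_geom. rewrite Rabs_right. exact Hp. apply Rle_ge, Cmod_ge_0.
  exists 0%nat. intros n _. replace (Cpow p n - 0) with (Cpow p n) by ring. rewrite Cmod_pow. lra.
Qed.

Section QGauss.
Variables (A B p : C).
Hypothesis Hp : (Cmod p < 1)%R.
Hypothesis HA : A <> 0.
Hypothesis HB : B <> 0.

Lemma tG_bound :
  exists Kp, (0 < Kp)%R /\ forall (C' : C) (L' : R), (0 < L')%R -> (forall n, L' <= Cmod (qpoch C' p n))%R ->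
  forall n, (Cmod (tG A B p C' n) <= Kp / L' * Cmod (C' / (A * B)) ^ n)%R.
Proof.
  destruct (qp_lower p p Hp) as [Lp [HLp HLp']].
  { intro n. apply qp_nz_small; exact Hp. }
  set (UA := exp (Cmod A / (1 - Cmod p))). set (UB := exp (Cmod B / (1 - Cmod p))).
  exists (UA * UB / Lp)%R. split.
  { unfold UA, UB. apply Rdiv_lt_0_compat. apply Rmult_lt_0_compat; apply exp_pos. nra. }
  intros C' L' HL' HC' n. unfold tG. rewrite Cmod_mult, Cmod_div, !Cmod_mult, Cmod_pow.
  apply Rmult_le_compat_r. apply pow_le, Cmod_ge_0.
  replace (UA * UB / Lp / L')%R with (UA * UB / (Lp * L'))%R by (field; lra).
  apply frac_bound; try split; try apply Cmod_ge_0; auto.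
  apply qp_upper, Hp. apply qp_upper, Hp.
  apply Cmult_neq_0. intro E. specialize (HLp' n). rewrite E, Cmod_0 in HLp'. lra.
  intro E. specialize (HC' n). rewrite E, Cmod_0 in HC'. lra.
Qed.

Lemma tG_series (C' : C) : (Cmod C' < 1)%R -> (Cmod (C' / (A * B)) < 1)%R ->
  exists F, is_series (tG A B p C') F.
Proof.
  intros H1 H2. destruct (qp_lower C' p Hp) as [L [HL HL']].
  { intro n. apply qp_nz_small; assumption. }
  destruct tG_bound as [K [HK HKb]].
  apply ex_series_maj with (fun n => K / L * Cmod (C' / (A * B)) ^ n)%R. apply HKb; assumption.
  apply ex_series_geomK. split. apply Cmod_ge_0. exact H2.
Qed.

Lemma tG_0 C' : tG A B p C' 0 = 1.
Proof. unfold tG. simpl. field. Qed.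

Lemma tG_PT (Cc : C) n : (Cmod Cc < 1)%R ->
  (1 - Cc) * (1 - Cc / (A * B)) * tG A B p Cc n - (1 - Cc / A) * (1 - Cc / B) * tG A B p (Cc * p) n
  = - ((1 - Cc) * ((1 - Cpow p (S n)) * tG A B p Cc (S n) - (1 - Cpow p n) * tG A B p Cc n)).
Proof.
  intro HC.
  assert (HqC := qp_nz_small Cc p (S n) HC Hp).
  assert (Hqp := qp_nz_small p p (S n) Hp Hp).
  assert (HqC' := HqC). rewrite qpoch_S' in HqC'.
  assert (H1C : 1 - Cc <> 0). { intro E. apply HqC'. rewrite E. ring. }
  assert (ECp : qpoch (Cc * p) p n = qpoch Cc p n * (1 - Cc * Cpow p n) / (1 - Cc)).
  { rewrite <- qpoch_S, qpoch_S'. field. exact H1C. }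
  rewrite qpoch_S in HqC, Hqp.
  unfold tG. rewrite ECp, !qpoch_S.
  replace (Cc * p / (A * B)) with (Cc / (A * B) * p) by (field; split; assumption).
  rewrite Cpow_mult_l, !Cpow_S.
  set (z := Cc / (A * B)) in *. set (x := Cpow p n) in *.
  set (QA := qpoch A p n) in *. set (QB := qpoch B p n) in *. set (QP := qpoch p p n) in *. set (QC := qpoch Cc p n) in *.
  set (zn := Cpow z n) in *.
  assert (QP <> 0) by (intro E; apply Hqp; rewrite E; ring).
  assert (QC <> 0) by (intro E; apply HqC; rewrite E; ring).
  assert (1 - Cc * x <> 0) by (intro E; apply HqC; rewrite E; ring).
  assert (1 - p * x <> 0) by (intro E; apply Hqp; rewrite E; ring).
  unfold z. field. repeat split; assumption.
Qed.

Lemma tG_PS (Cc : C) n : (Cmod Cc < 1)%R ->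
  @eq C (sum_n (fun k => (1 - Cc) * (1 - Cc / (A * B)) * tG A B p Cc k
                 - (1 - Cc / A) * (1 - Cc / B) * tG A B p (Cc * p) k) n)
   (- ((1 - Cc) * (1 - Cpow p (S n)) * tG A B p Cc (S n))).
Proof.
  intro HC. induction n.
  - rewrite sum_n_C_0, tG_PT by exact HC. simpl. ring.
  - rewrite sum_n_C_S, IHn, tG_PT by exact HC. ring.
Qed.

Lemma contiguous (Cc F1 F2 : C) : (Cmod Cc < 1)%R ->
  is_series (tG A B p Cc) F1 -> is_series (tG A B p (Cc * p)) F2 ->
  (1 - Cc) * (1 - Cc / (A * B)) * F1 = (1 - Cc / A) * (1 - Cc / B) * F2.
Proof.
  intros HC H1 H2.
  assert (Hs := series_minus _ _ _ _ (series_scal ((1 - Cc) * (1 - Cc / (A * B))) _ _ H1)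
                                     (series_scal ((1 - Cc / A) * (1 - Cc / B)) _ _ H2)).
  apply series_cv in Hs.
  assert (H0 : cv (sum_n (fun k => (1 - Cc) * (1 - Cc / (A * B)) * tG A B p Cc k
                 - (1 - Cc / A) * (1 - Cc / B) * tG A B p (Cc * p) k)) 0).
  { eapply cv_ext. intro n. symmetry. apply tG_PS, HC.
    replace (RtoC 0) with (- (1 - Cc) * (1 - 0) * 0) by ring.
    apply (cv_ext (fun n => - (1 - Cc) * (1 - Cpow p (S n)) * tG A B p Cc (S n))).
    intro n. ring.
    apply cv_mult. apply cv_mult. apply cv_const.
    apply (cv_ext (fun n => 1 + - Cpow p (n + 1)%nat)). intro n. rewrite Nat.add_1_r. ring.
    replace (1 - 0) with (1 + - 0) by ring. apply cv_plus. apply cv_const.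
    apply (cv_ext (fun n => -1 * Cpow p (n + 1)%nat)). intro n. ring.
    replace (- (RtoC 0)) with (-1 * 0) by ring. apply cv_mult. apply cv_const.
    apply cv_shift'. apply cv_pow0, Hp.
    apply (cv_ext (fun n => tG A B p Cc (n + 1)%nat)). intro n. rewrite Nat.add_1_r. reflexivity.
    apply cv_shift'. eapply series_term0. exact H1. }
  assert (E := cv_unique _ _ _ Hs H0).
  apply Ceq_minus. exact E.
Qed.

Definition FG (C' : C) : C := climit (sum_n (tG A B p C')).

Lemma FG_ok (C' : C) : (Cmod C' < 1)%R -> (Cmod (C' / (A * B)) < 1)%R ->
  is_series (tG A B p C') (FG C').
Proof.
  intros H1 H2. destruct (tG_series C' H1 H2) as [F HF].
  unfold FG. rewrite (climit_cv _ _ (series_cv _ _ HF)). exact HF.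
Qed.

Lemma Cmod_pow_le1 (x : C) n : (Cmod x < 1)%R -> (Cmod (Cpow x n) <= 1)%R.
Proof. intro H. rewrite Cmod_pow. apply pow_le_1. pose proof (Cmod_ge_0 x); lra. Qed.

Section Fix.
Variable Cc : C.
Hypothesis HC : (Cmod Cc < 1)%R.
Hypothesis Hz : (Cmod (Cc / (A * B)) < 1)%R.

Lemma shifted_ok N : (Cmod (Cc * Cpow p N) < 1)%R /\ (Cmod (Cc * Cpow p N / (A * B)) < 1)%R.
Proof.
  pose proof (Cmod_pow_le1 p N Hp). pose proof (Cmod_ge_0 Cc). split.
  - rewrite Cmod_mult. pose proof (Cmod_ge_0 (Cpow p N)). nra.
  - replace (Cc * Cpow p N / (A * B)) with (Cc / (A * B) * Cpow p N) by (field; split; assumption).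
    rewrite Cmod_mult. pose proof (Cmod_ge_0 (Cpow p N)). pose proof (Cmod_ge_0 (Cc / (A * B))). nra.
Qed.

Lemma iterate N : qpoch Cc p N * qpoch (Cc / (A * B)) p N * FG Cc
  = qpoch (Cc / A) p N * qpoch (Cc / B) p N * FG (Cc * Cpow p N).
Proof.
  induction N.
  - simpl. replace (Cc * 1) with Cc by ring. ring.
  - rewrite !qpoch_S.
    transitivity (qpoch Cc p N * qpoch (Cc / (A * B)) p N * FG Cc
                  * (1 - Cc * Cpow p N) * (1 - Cc / (A * B) * Cpow p N)). ring.
    rewrite IHN.
    destruct (shifted_ok N) as [H1 H2]. destruct (shifted_ok (S N)) as [H3 H4].
    assert (E : Cc * Cpow p (S N) = Cc * Cpow p N * p) by (rewrite Cpow_S; ring).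
    rewrite E in H3, H4 |- *.
    assert (Hc := contiguous (Cc * Cpow p N) _ _ H1 (FG_ok _ H1 H2) (FG_ok _ H3 H4)).
    replace (1 - Cc / (A * B) * Cpow p N) with (1 - Cc * Cpow p N / (A * B)) by (field; split; assumption).
    transitivity (qpoch (Cc / A) p N * qpoch (Cc / B) p N *
      ((1 - Cc * Cpow p N) * (1 - Cc * Cpow p N / (A * B)) * FG (Cc * Cpow p N))). ring.
    rewrite Hc.
    replace (Cc * Cpow p N / A) with (Cc / A * Cpow p N) by (field; assumption).
    replace (Cc * Cpow p N / B) with (Cc / B * Cpow p N) by (field; assumption).
    ring.
Qed.

Lemma FG_lim : cv (fun N => FG (Cc * Cpow p N)) 1.
Proof.
  destruct tG_bound as [Kp [HKp HKb]].
  pose proof (Cmod_ge_0 p) as Hp0. pose proof (Cmod_ge_0 Cc) as HC0.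
  set (z := Cc / (A * B)) in *. pose proof (Cmod_ge_0 z) as Hz0.
  destruct (small_pow_exists (Cmod p) ((1 - Cmod p) / 2 / (Cmod Cc + 1)) ltac:(lra)) as [N0 HN0].
  { apply Rdiv_lt_0_compat; lra. }
  apply cv_bound with (e := fun N => (2 * Kp * Cmod z / (1 - Cmod z) * Cmod p ^ N)%R).
  { replace (Finite 0) with (Rbar_mult (2 * Kp * Cmod z / (1 - Cmod z))%R 0%R) by (simpl; f_equal; ring).
    apply is_lim_seq_scal_l. apply is_lim_seq_geom. rewrite Rabs_right; lra. }
  exists N0. intros N HN.
  destruct (shifted_ok N) as [H1 H2].
  set (C' := Cc * Cpow p N) in *.
  assert (HL : forall n, (/2 <= Cmod (qpoch C' p n))%R).
  { intro n. apply qp_lower_half. exact Hp. unfold C'. rewrite Cmod_mult, Cmod_pow.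
    specialize (HN0 N HN).
    assert (Cmod p ^ N * (Cmod Cc + 1) < (1 - Cmod p) / 2)%R.
    { apply Rmult_lt_reg_r with (/ (Cmod Cc + 1))%R. apply Rinv_0_lt_compat; lra.
      rewrite Rmult_assoc, Rinv_r by lra. lra. }
    assert (0 <= Cmod p ^ N)%R by (apply pow_le; lra). nra. }
  assert (Ez : C' / (A * B) = z * Cpow p N) by (unfold C', z; field; split; assumption).
  assert (Ht := series_tail _ _ 0 (FG_ok C' H1 H2)).
  rewrite sum_n_C_0, tG_0 in Ht.
  replace (2 * Kp * Cmod z / (1 - Cmod z) * Cmod p ^ N)%R with (2 * Kp * Cmod z * Cmod p ^ N / (1 - Cmod z))%R by (field; lra).
  eapply series_norm_le. exact Ht.
  2:{ apply is_series_geomK with (K := (2 * Kp * Cmod z * Cmod p ^ N)%R). lra. }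
  intro m. eapply Rle_trans. apply (HKb C' (/2)%R). lra. exact HL.
  rewrite Ez, Cmod_mult, Cmod_pow.
  assert (Hpn : (0 <= Cmod p ^ N <= 1)%R) by (apply pow_le_1; lra).
  simpl (S 0 + m)%nat. simpl pow.
  rewrite Rpow_mult_distr.
  assert (0 <= Cmod z ^ m)%R by (apply pow_le; lra).
  assert (Hq : (0 <= (Cmod p ^ N) ^ m <= 1)%R) by (apply pow_le_1; lra).
  replace (Kp / / 2)%R with (2 * Kp)%R by (field).
  assert (0 <= Cmod z * Cmod p ^ N)%R by nra.
  assert (0 <= Cmod z ^ m * (Cmod z * Cmod p ^ N))%R by nra.
  assert (0 <= (2 * Kp * (Cmod z ^ m * (Cmod z * Cmod p ^ N))) * (1 - (Cmod p ^ N) ^ m))%R.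
  { apply Rmult_le_pos; nra. }
  nra.
Qed.

Lemma qgauss_FG : FG Cc = qpinf (Cc / A) p * qpinf (Cc / B) p / (qpinf Cc p * qpinf (Cc / (A * B)) p).
Proof.
  assert (Hu : cv (fun N => qpoch Cc p N * qpoch (Cc / (A * B)) p N * FG Cc)
                  (qpinf Cc p * qpinf (Cc / (A * B)) p * FG Cc)).
  { apply cv_mult. apply cv_mult; apply qp_cv, Hp. apply cv_const. }
  assert (Hv : cv (fun N => qpoch Cc p N * qpoch (Cc / (A * B)) p N * FG Cc)
                  (qpinf (Cc / A) p * qpinf (Cc / B) p * 1)).
  { eapply cv_ext. intro N. symmetry. apply iterate.
    apply cv_mult. apply cv_mult; apply qp_cv, Hp. apply FG_lim. }
  assert (E := cv_unique _ _ _ Hu Hv).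
  assert (N1 : qpinf Cc p <> 0) by (apply qpinf_nz; [exact Hp | intro n; apply qp_nz_small; assumption]).
  assert (N2 : qpinf (Cc / (A * B)) p <> 0) by (apply qpinf_nz; [exact Hp | intro n; apply qp_nz_small; assumption]).
  rewrite Cmult_1_r in E. rewrite <- E. field. split; assumption.
Qed.

Lemma qgauss : is_series (tG A B p Cc)
  (qpinf (Cc / A) p * qpinf (Cc / B) p / (qpinf Cc p * qpinf (Cc / (A * B)) p)).
Proof. rewrite <- qgauss_FG. apply FG_ok; assumption. Qed.

End Fix.
End QGauss.


Lemma poly_geom_aux (r : R) n : (0 <= r < 1)%R -> (INR (S n) * r ^ n <= / (1 - r))%R.
Proof.
  intro Hr. induction n.
  - simpl. rewrite Rmult_1_r. apply Rmult_le_reg_r with (1 - r)%R. lra.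
    rewrite Rinv_l by lra. lra.
  - rewrite S_INR. simpl pow.
    assert (0 <= r ^ n <= 1)%R by (apply pow_le_1; lra).
    replace ((INR (S n) + 1) * (r * r ^ n))%R with (r * (INR (S n) * r ^ n) + r * r ^ n)%R by ring.
    assert (/ (1 - r) = r * / (1 - r) + 1)%R by (field; lra).
    assert (r * (INR (S n) * r ^ n) <= r * / (1 - r))%R by (apply Rmult_le_compat_l; lra).
    nra.
Qed.

Lemma poly_geom (s : R) : (0 <= s < 1)%R ->
  exists Cst tau, (0 < Cst)%R /\ (s <= tau < 1)%R /\ forall n, (INR (S n) * s ^ n <= Cst * tau ^ n)%R.
Proof.
  intro Hs. set (tau := ((1 + s) / 2)%R). set (rho := (s / tau)%R).
  assert (Ht : (0 < tau)%R) by (unfold tau; lra).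
  assert (Hr : (0 <= rho < 1)%R).
  { unfold rho. split. apply Rdiv_le_0_compat; lra.
    apply Rmult_lt_reg_r with tau. lra. unfold Rdiv. rewrite Rmult_assoc, Rinv_l by lra. unfold tau; lra. }
  exists (/ (1 - rho))%R, tau. split. apply Rinv_0_lt_compat; lra. split. unfold tau; lra.
  intro n. replace s with (rho * tau)%R by (unfold rho; field; lra).
  rewrite Rpow_mult_distr, <- Rmult_assoc. apply Rmult_le_compat_r. apply pow_le; lra.
  apply poly_geom_aux, Hr.
Qed.

Lemma sum_n_R_le_loc (a b : nat -> R) n : (forall k, (k <= n)%nat -> a k <= b k)%R -> (sum_n a n <= sum_n b n)%R.
Proof.
  intro H. induction n.
  - rewrite !sum_O. apply H. lia.
  - rewrite !sum_n_R_S. assert (a (S n) <= b (S n))%R by (apply H; lia).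
    assert (sum_n a n <= sum_n b n)%R by (apply IHn; intros; apply H; lia). lra.
Qed.

Lemma sum_const_R (c : R) n : @eq R (sum_n (fun _ => c) n) (INR (S n) * c)%R.
Proof.
  induction n. rewrite sum_O. simpl. ring.
  rewrite sum_n_R_S, IHn. rewrite (S_INR (S n)). ring.
Qed.

Lemma sum_n_C_minus (a b : nat -> C) n : @eq C (sum_n (fun k => a k - b k) n) (sum_n a n - sum_n b n).
Proof.
  induction n. rewrite !sum_n_C_0. reflexivity.
  rewrite !sum_n_C_S, IHn. ring.
Qed.

Lemma sum_n_C_plus (a b : nat -> C) n : @eq C (sum_n (fun k => a k + b k) n) (sum_n a n + sum_n b n).
Proof.
  induction n. rewrite !sum_n_C_0. reflexivity.
  rewrite !sum_n_C_S, IHn. ring.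
Qed.

Lemma sum_n_C_ext_loc (a b : nat -> C) n : (forall k, (k <= n)%nat -> a k = b k) -> @eq C (sum_n a n) (sum_n b n).
Proof. intro H. apply sum_n_ext_loc. exact H. Qed.

Lemma sum_n_C_ext (a b : nat -> C) n : (forall k, a k = b k) -> @eq C (sum_n a n) (sum_n b n).
Proof. intro H. apply sum_n_ext. exact H. Qed.

Lemma tri_sum (f : nat -> nat -> C) N :
  @eq C (sum_n (fun n => sum_n (fun r => f r (n - r)%nat) n) N)
        (sum_n (fun r => sum_n (f r) (N - r)%nat) N).
Proof.
  induction N.
  - rewrite !sum_n_C_0. simpl. reflexivity.
  - rewrite sum_n_C_S, IHN. rewrite (sum_n_C_S (fun r => sum_n (f r) (S N - r)%nat)).
    rewrite (sum_n_C_ext_loc (fun r => sum_n (f r) (S N - r)%nat)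
               (fun r => sum_n (f r) (N - r)%nat + f r (S N - r)%nat)).
    2:{ intros k Hk. replace (S N - k)%nat with (S (N - k)) by lia. rewrite sum_n_C_S. reflexivity. }
    rewrite sum_n_C_plus, sum_n_C_S.
    replace (S N - S N)%nat with 0%nat by lia. rewrite sum_n_C_0. ring.
Qed.

Lemma interchange (f : nat -> nat -> C) (K tau : R) (F : nat -> C) (U : C) :
  (0 <= K)%R -> (0 <= tau < 1)%R ->
  (forall r m, Cmod (f r m) <= K * tau ^ (r + m))%R ->
  (forall r, is_series (f r) (F r)) -> is_series F U ->
  is_series (fun n => sum_n (fun r => f r (n - r)%nat) n) U.
Proof.
  intros HK Ht Hf HF HU.
  apply cv_series.
  destruct (poly_geom tau Ht) as [Cst [sig [HC [Hs Hb]]]].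
  set (c := (K / (1 - tau) * tau)%R).
  assert (Hc : (0 <= c)%R) by (unfold c; apply Rmult_le_pos; [apply Rdiv_le_0_compat|]; lra).
  apply cv_bound with (e := fun N => (c * (INR (S N) * tau ^ N) + Cmod (sum_n F N - U))%R).
  { replace 0%R with (0 + 0)%R by ring. apply is_lim_seq_plus'.
    - apply is_lim_seq_le_le with (u := fun _ => 0%R) (w := fun N => (c * Cst * sig ^ N)%R).
      + intro N. split. apply Rmult_le_pos. lra. apply Rmult_le_pos. apply pos_INR. apply pow_le; lra.
        rewrite Rmult_assoc. apply Rmult_le_compat_l. lra. apply Hb.
      + apply is_lim_seq_const.
      + replace (Finite 0) with (Rbar_mult (c * Cst)%R 0%R) by (simpl; f_equal; ring).
        apply is_lim_seq_scal_l. apply is_lim_seq_geom. rewrite Rabs_right; lra.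
    - apply series_cv, HU. }
  exists 0%nat. intros N _.
  rewrite tri_sum.
  replace (sum_n (fun r => sum_n (f r) (N - r)%nat) N - U)
    with (- (sum_n (fun r => F r - sum_n (f r) (N - r)%nat) N) + (sum_n F N - U))
    by (rewrite sum_n_C_minus; ring).
  eapply Rle_trans. apply Cmod_triangle. rewrite Cmod_opp.
  apply Rplus_le_compat_r.
  eapply Rle_trans. apply Cmod_sum_le.
  eapply Rle_trans. apply sum_n_R_le_loc with (b := fun _ => (K * tau ^ (S N) / (1 - tau))%R).
  - intros r Hr.
    assert (Htl := series_tail _ _ (N - r)%nat (HF r)).
    eapply series_norm_le. exact Htl.
    2:{ apply is_series_geomK with (K := (K * tau ^ S N)%R). lra. }
    intro m. simpl. eapply Rle_trans. apply Hf.
    replace (r + S (N - r + m))%nat with (S N + m)%nat by lia.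
    rewrite pow_add. simpl pow. right. ring.
  - rewrite sum_const_R. unfold c. simpl pow. right. field. lra.
Qed.


Lemma zpow_nat (q : C) m : zpow q (Z.of_nat m) = Cpow q m.
Proof. destruct m. reflexivity. simpl. rewrite SuccNat2Pos.id_succ. reflexivity. Qed.

Lemma zpow_neg_nat (q : C) m : zpow q (- Z.of_nat m) = / Cpow q m.
Proof.
  destruct m. simpl. rewrite <- (Cinv_r 1) at 1 by apply C1_nz. ring.
  simpl. rewrite SuccNat2Pos.id_succ. reflexivity.
Qed.

Lemma zpow_nat_sub (q : C) m k : q <> 0 -> zpow q (Z.of_nat m - Z.of_nat k) = Cpow q m / Cpow q k.
Proof.
  intro Hq. destruct (le_lt_dec k m) as [H|H].
  - replace (Z.of_nat m - Z.of_nat k)%Z with (Z.of_nat (m - k)) by lia.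
    rewrite zpow_nat. replace m with ((m - k) + k)%nat at 2 by lia. rewrite Cpow_add_r.
    field. apply Cpow_nz, Hq.
  - replace (Z.of_nat m - Z.of_nat k)%Z with (- Z.of_nat (k - m))%Z by lia.
    rewrite zpow_neg_nat. replace k with ((k - m) + m)%nat at 2 by lia. rewrite Cpow_add_r.
    field. split; apply Cpow_nz, Hq.
Qed.

Lemma Zdecomp a : a = (Z.of_nat (Z.to_nat a) - Z.of_nat (Z.to_nat (- a)))%Z.
Proof. lia. Qed.

Lemma zpow_add (q : C) a b : q <> 0 -> zpow q (a + b) = zpow q a * zpow q b.
Proof.
  intro Hq. rewrite (Zdecomp a), (Zdecomp b).
  set (m1 := Z.to_nat a). set (k1 := Z.to_nat (-a)). set (m2 := Z.to_nat b). set (k2 := Z.to_nat (-b)).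
  replace (Z.of_nat m1 - Z.of_nat k1 + (Z.of_nat m2 - Z.of_nat k2))%Z
    with (Z.of_nat (m1 + m2) - Z.of_nat (k1 + k2))%Z by lia.
  rewrite !zpow_nat_sub by exact Hq. rewrite !Cpow_add_r.
  field. split; apply Cpow_nz, Hq.
Qed.

Lemma sum_shift (f : nat -> C) n : @eq C (sum_n f (S n)) (f 0%nat + sum_n (fun k => f (S k)) n).
Proof.
  induction n.
  - rewrite sum_n_C_S, !sum_n_C_0. reflexivity.
  - rewrite sum_n_C_S, IHn, sum_n_C_S. ring.
Qed.

Lemma sum_reflect (F : nat -> C) M : @eq C (sum_n (fun k => F (M - k)%nat) M) (sum_n F M).
Proof.
  induction M.
  - rewrite !sum_n_C_0. reflexivity.
  - rewrite sum_shift, sum_n_C_S. simpl (S M - 0)%nat.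
    rewrite (sum_n_C_ext (fun k => F (S M - S k)%nat) (fun k => F (M - k)%nat)) by (intro k; reflexivity).
    rewrite IHM. ring.
Qed.

Lemma sum_n_C_mult_r (a : nat -> C) (c : C) n : @eq C (sum_n (fun k => a k * c) n) (sum_n a n * c).
Proof. induction n. rewrite !sum_n_C_0. reflexivity. rewrite !sum_n_C_S, IHn. ring. Qed.

Lemma sum_n_C_mult_l (a : nat -> C) (c : C) n : @eq C (sum_n (fun k => c * a k) n) (c * sum_n a n).
Proof. induction n. rewrite !sum_n_C_0. reflexivity. rewrite !sum_n_C_S, IHn. ring. Qed.

Lemma sum_swap (h c : nat -> C) n :
  @eq C (sum_n (fun r => h r * sum_n c r) n)
        (sum_n (fun j => c j * sum_n (fun i => h (j + i)%nat) (n - j)) n).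
Proof.
  induction n.
  - rewrite !sum_n_C_0. simpl. ring.
  - rewrite sum_n_C_S, IHn, (sum_n_C_S (fun j => c j * sum_n (fun i => h (j + i)%nat) (S n - j))).
    rewrite (sum_n_C_ext_loc (fun j => c j * sum_n (fun i => h (j + i)%nat) (S n - j))
              (fun j => c j * sum_n (fun i => h (j + i)%nat) (n - j) + c j * h (S n))).
    2:{ intros k Hk. replace (S n - k)%nat with (S (n - k)) by lia. rewrite sum_n_C_S.
        replace (k + S (n - k))%nat with (S n) by lia. ring. }
    rewrite sum_n_C_plus. replace (S n - S n)%nat with 0%nat by lia. rewrite sum_n_C_0, Nat.add_0_r.
    rewrite sum_n_C_S.
    rewrite sum_n_C_mult_r. ring.
Qed.

Definition symsum (chi : Z -> C) (n : nat) : C :=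
  sum_n (fun k => chi (Z.of_nat k - Z.of_nat n)%Z) (2 * n).

Lemma symsum_S chi n : symsum chi (S n) = chi (- Z.of_nat (S n))%Z + symsum chi n + chi (Z.of_nat (S n)).
Proof.
  unfold symsum. replace (2 * S n)%nat with (S (S (2 * n))) by lia.
  rewrite sum_n_C_S, sum_shift.
  replace (Z.of_nat 0 - Z.of_nat (S n))%Z with (- Z.of_nat (S n))%Z by lia.
  replace (Z.of_nat (S (S (2 * n))) - Z.of_nat (S n))%Z with (Z.of_nat (S n)) by lia.
  rewrite (sum_n_C_ext (fun k => chi (Z.of_nat (S k) - Z.of_nat (S n))%Z) (fun k => chi (Z.of_nat k - Z.of_nat n)%Z)).
  reflexivity. intro k. f_equal. lia.
Qed.

Definition symc (chi : Z -> C) (j : nat) : C :=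
  if Nat.eqb j 0 then chi 0%Z else chi (- Z.of_nat j)%Z + chi (Z.of_nat j).

Lemma symsum_eq chi n : symsum chi n = sum_n (symc chi) n.
Proof.
  induction n.
  - unfold symsum. simpl. rewrite !sum_n_C_0. reflexivity.
  - rewrite symsum_S, IHn, sum_n_C_S. change (symc chi (S n)) with (chi (- Z.of_nat (S n))%Z + chi (Z.of_nat (S n))). ring.
Qed.


Lemma Cpow_q2 (q : C) k : Cpow (Cpow q 2) k = Cpow q (2 * k).
Proof. rewrite Cpow_mult_r. reflexivity. Qed.

Lemma Cpow_addq (q : C) a b c : (a + b = c)%nat -> Cpow q a * Cpow q b = Cpow q c.
Proof. intro H. rewrite <- Cpow_add_r, H. reflexivity. Qed.

Section FI.
Variable q : C.
Hypothesis Hq0 : q <> 0.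
Hypothesis Hq1 : (Cmod q < 1)%R.

Let p := Cpow q 2.

Lemma Hp1 : (Cmod p < 1)%R.
Proof. unfold p. rewrite Cmod_pow. pose proof (Cmod_ge_0 q). simpl. nra. Qed.

Lemma qpp_nz k : qpoch p p k <> 0.
Proof. apply qp_nz_small; apply Hp1. Qed.

Lemma qqq_nz k : qpoch q q k <> 0.
Proof. apply qp_nz_small; apply Hq1. Qed.

Lemma one_plus_nz (w : C) : (Cmod w < 1)%R -> 1 + w <> 0.
Proof.
  intros H E. pose proof (Cmod_1_minus_ge (- w)). replace (1 - - w) with (1 + w) in H0 by ring.
  rewrite E, Cmod_0, Cmod_opp in H0. lra.
Qed.

Lemma one_minus_nz (w : C) : (Cmod w < 1)%R -> 1 - w <> 0.
Proof.
  intros H E. pose proof (Cmod_1_minus_ge w). rewrite E, Cmod_0 in H0. lra.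
Qed.

Lemma Cmod_powS_lt (k : nat) : (Cmod (Cpow q (S k)) < 1)%R.
Proof.
  rewrite Cmod_pow. simpl. pose proof (pow_le_1 (Cmod q) k ltac:(pose proof (Cmod_ge_0 q); lra)).
  pose proof (Cmod_ge_0 q). nra.
Qed.

Lemma onep_nz k : 1 + Cpow q (S k) <> 0.
Proof. apply one_plus_nz, Cmod_powS_lt. Qed.

Lemma onem_nz k : 1 - Cpow q (S k) <> 0.
Proof. apply one_minus_nz, Cmod_powS_lt. Qed.

Lemma E_id N : @eq C (sum_n (fun k => Cpow q k / (qpoch p p k * qpoch p p (N - k))) N) (/ qpoch q q N).
Proof.
  induction N.
  - rewrite sum_n_C_0. simpl. field.
  - set (M := S N).
    set (F := fun k => Cpow q k / (qpoch p p k * qpoch p p (M - k))).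
    assert (Ha : @eq C (sum_n (fun k => Cpow q k / (qpoch p p k * qpoch p p (N - k))) N)
                   (sum_n (fun k => F k * (1 - Cpow p (M - k))) M)).
    { unfold M. rewrite sum_n_C_S. replace (S N - S N)%nat with 0%nat by lia.
      simpl (Cpow p 0). replace (F (S N) * (1 - 1)) with (RtoC 0) by ring. rewrite Cplus_0_r.
      apply sum_n_C_ext_loc. intros k Hk. unfold F, M.
      replace (S N - k)%nat with (S (N - k)) by lia.
      rewrite qpoch_S, Cpow_S.
      assert (1 - p * Cpow p (N - k) <> 0).
      { unfold p. rewrite <- Cpow_S, Cpow_q2. replace (2 * S (N - k))%nat with (S (2 * (N - k) + 1)) by lia.
        apply onem_nz. }
      field. repeat split; auto using qpp_nz. }
    assert (Hb : forall k, (k <= M)%nat ->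
       (1 - Cpow q M) * F k - F k * (1 - Cpow p (M - k)) = Cpow q M * (F (M - k)%nat - F k)).
    { intros k Hk. unfold F. cbv beta. replace (M - (M - k))%nat with k by lia.
      assert (E1 : Cpow q k * Cpow p (M - k) = Cpow q M * Cpow q (M - k)).
      { unfold p. rewrite Cpow_q2. rewrite (Cpow_addq q k (2 * (M - k))%nat (M + (M - k))%nat) by lia.
        symmetry. apply Cpow_addq. reflexivity. }
      assert (E1' : Cpow p (M - k) = Cpow q M * Cpow q (M - k) / Cpow q k)
        by (rewrite <- E1; field; apply Cpow_nz, Hq0).
      rewrite E1'. field. repeat split; auto using qpp_nz, Cpow_nz. }
    assert (Hc : @eq C ((1 - Cpow q M) * sum_n F M - sum_n (fun k => F k * (1 - Cpow p (M - k))) M) 0).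
    { rewrite <- sum_n_C_mult_l, <- sum_n_C_minus.
      rewrite (sum_n_C_ext_loc _ (fun k => Cpow q M * (F (M - k)%nat - F k))) by exact Hb.
      rewrite sum_n_C_mult_l, sum_n_C_minus, sum_reflect. ring. }
    rewrite <- Ha, IHN in Hc.
    change (sum_n (fun k => Cpow q k / (qpoch p p k * qpoch p p (S N - k))) (S N)) with (sum_n F M).
    assert (HM : 1 - Cpow q M <> 0) by apply onem_nz.
    apply Ceq_minus in Hc.
    unfold M in *. rewrite qpoch_S. rewrite Cpow_S in *.
    assert (Hq := qqq_nz N).
    set (S0 := sum_n F (S N)) in *.
    replace S0 with ((1 - q * Cpow q N) * S0 / (1 - q * Cpow q N)) by (field; exact HM).
    rewrite Hc. field. split; assumption.
Qed.

Lemma alg_step (Q0 a w PAm PB : C) : PAm <> 0 -> PB <> 0 -> 1 - w <> 0 -> 1 - a * (w * a) <> 0 ->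
  1 + w * a <> 0 ->
  (1 - a) * Q0 / (PAm * (1 - w) * (PB * (1 - a * (w * a))))
  + Q0 * a / (PAm * (PB * (1 - a * (w * a))) * (1 + w * a))
  = Q0 / (PAm * (1 - w) * PB * (1 + w * a)).
Proof. intros. field. repeat split; assumption. Qed.

Definition gam n r := / (qpoch p p (n - r) * qpoch p p (n + r + 1)).
Definition hh n r := (1 - Cpow q (2 * r + 1)) * Cpow q (r * r) * gam n r.
Definition TT n j := Cpow q (j * j) / (qpoch p p (n - j) * qpoch p p (n + j) * (1 + Cpow q (2 * n + 1))).

Lemma qpp_S m : qpoch p p (S m) = qpoch p p m * (1 - Cpow q (2 * S m)).
Proof. rewrite qpoch_S. f_equal. f_equal. unfold p. rewrite <- Cpow_S, Cpow_q2. reflexivity. Qed.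

Lemma qpp_1m_nz m : 1 - Cpow q (2 * S m) <> 0.
Proof. replace (2 * S m)%nat with (S (2 * m + 1)) by lia. apply onem_nz. Qed.

Lemma TEL d : forall j n, (j + d = n)%nat -> @eq C (sum_n (fun i => hh n (j + i)%nat) d) (TT n j).
Proof.
  induction d; intros j n Hjn.
  - rewrite sum_n_C_0. rewrite Nat.add_0_r in *. subst n. unfold hh, TT, gam.
    replace (j + j + 1)%nat with (S (j + j)) by lia. rewrite qpp_S.
    assert (E : Cpow q (2 * S (j + j)) = Cpow q (2 * j + 1) * Cpow q (2 * j + 1)) by (symmetry; apply Cpow_addq; lia).
    rewrite E. replace (j - j)%nat with 0%nat by lia.
    assert (H1 : 1 - Cpow q (2 * j + 1) <> 0) by (rewrite Nat.add_1_r; apply onem_nz).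
    assert (H2 : 1 + Cpow q (2 * j + 1) <> 0) by (rewrite Nat.add_1_r; apply onep_nz).
    assert (H3 := qpp_nz (j + j)). assert (H4 := qpp_nz 0).
    assert (H5 : 1 - Cpow q (2 * j + 1) * Cpow q (2 * j + 1) <> 0).
    { replace (1 - Cpow q (2 * j + 1) * Cpow q (2 * j + 1)) with ((1 - Cpow q (2 * j + 1)) * (1 + Cpow q (2 * j + 1))) by ring.
      apply Cmult_neq_0; assumption. }
    field. repeat split; auto.
  - rewrite sum_shift, Nat.add_0_r.
    rewrite (sum_n_C_ext (fun k => hh n (j + S k)%nat) (fun i => hh n (S j + i)%nat)) by (intro k; f_equal; lia).
    rewrite (IHd (S j) n) by lia.
    unfold hh, TT, gam.
    set (a := Cpow q (2 * j + 1)). set (w := Cpow q (2 * (n - j))).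
    assert (e1 : qpoch p p (n - j) = qpoch p p (n - S j) * (1 - w)).
    { replace (n - j)%nat with (S (n - S j)) by lia. rewrite qpp_S. unfold w. f_equal. f_equal. f_equal. lia. }
    assert (e2 : qpoch p p (n + j + 1) = qpoch p p (n + j) * (1 - a * (w * a))).
    { replace (n + j + 1)%nat with (S (n + j)) by lia. rewrite qpp_S. unfold a, w. f_equal. f_equal.
      rewrite (Cpow_addq q (2 * (n - j)) (2 * j + 1) (2 * n + 1)) by lia.
      symmetry. apply Cpow_addq. lia. }
    assert (e2' : qpoch p p (n + S j) = qpoch p p (n + j) * (1 - a * (w * a))).
    { rewrite <- e2. f_equal. lia. }
    assert (e3 : Cpow q (S j * S j) = Cpow q (j * j) * a).
    { unfold a. symmetry. apply Cpow_addq. lia. }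
    assert (e4 : Cpow q (2 * n + 1) = w * a).
    { unfold a, w. symmetry. apply Cpow_addq. lia. }
    rewrite e1, e2, e2', e3, e4.
    assert (Hw : 1 - w <> 0).
    { unfold w. replace (2 * (n - j))%nat with (2 * S (n - S j))%nat by lia. apply qpp_1m_nz. }
    assert (Hab : 1 - a * (w * a) <> 0).
    { replace (a * (w * a)) with (Cpow q (2 * S (n + j))). apply qpp_1m_nz.
      unfold a, w. rewrite (Cpow_addq q (2 * (n - j)) (2 * j + 1) (2 * n + 1)) by lia.
      symmetry. apply Cpow_addq. lia. }
    assert (Hb : 1 + w * a <> 0).
    { rewrite <- e4. rewrite Nat.add_1_r. apply onep_nz. }
    apply alg_step; auto using qpp_nz.
Qed.

Definition psi (j : Z) : C := zpow q (- (j * j) - j)%Z.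
Definition alpha (r : nat) : C :=
  symsum (fun j => zpow q (Z.of_nat r * Z.of_nat r - j * j - j)%Z) r.

Lemma symsum_scal (c : C) f n : symsum (fun j => c * f j) n = c * symsum f n.
Proof. unfold symsum. apply sum_n_C_mult_l. Qed.

Lemma symsum_ext f g n : (forall j, f j = g j) -> symsum f n = symsum g n.
Proof. intro H. unfold symsum. apply sum_n_C_ext. intro k. apply H. Qed.

Lemma alpha_eq r : alpha r = Cpow q (r * r) * sum_n (symc psi) r.
Proof.
  unfold alpha. rewrite <- symsum_eq, <- symsum_scal. apply symsum_ext. intro j.
  unfold psi. rewrite <- zpow_nat, <- zpow_add by exact Hq0. f_equal. lia.
Qed.

Lemma symc_psi j : symc psi j * Cpow q (j * j) = symc (zpow q) j.
Proof.
  unfold symc. destruct (Nat.eqb j 0) eqn:Ej.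
  - apply Nat.eqb_eq in Ej. subst j. simpl. unfold psi. simpl. ring.
  - unfold psi. rewrite Cmult_plus_distr_r, <- !zpow_nat, <- !zpow_add by exact Hq0.
    rewrite Cplus_comm. f_equal; f_equal; lia.
Qed.

Definition chi3 (n : nat) (J : Z) : C :=
  zpow q J * / (qpoch p p (n - Z.abs_nat J) * qpoch p p (n + Z.abs_nat J)).

Lemma symc_chi3 n j : symc (chi3 n) j = symc (zpow q) j * / (qpoch p p (n - j) * qpoch p p (n + j)).
Proof.
  unfold symc, chi3. destruct (Nat.eqb j 0) eqn:Ej.
  - apply Nat.eqb_eq in Ej. subst j. simpl. rewrite Nat.sub_0_r, Nat.add_0_r. reflexivity.
  - replace (Z.abs_nat (- Z.of_nat j)) with j by lia. replace (Z.abs_nat (Z.of_nat j)) with j by lia. ring.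
Qed.

Lemma FI n : @eq C (sum_n (fun r => (1 - Cpow q (2 * r + 1)) * alpha r * gam n r) n)
  (Cpow (/ q) n / (qpoch q q (2 * n) * (1 + Cpow q (2 * n + 1)))).
Proof.
  rewrite (sum_n_C_ext _ (fun r => hh n r * sum_n (symc psi) r)) by (intro r; rewrite alpha_eq; unfold hh; ring).
  rewrite sum_swap.
  set (b := Cpow q (2 * n + 1)).
  assert (Hb : 1 + b <> 0) by (unfold b; rewrite Nat.add_1_r; apply onep_nz).
  rewrite (sum_n_C_ext_loc _ (fun j => symc (chi3 n) j * / (1 + b))).
  2:{ intros j Hj. rewrite TEL by lia. rewrite symc_chi3. rewrite <- symc_psi. unfold TT. fold b.
      field. repeat split; auto using qpp_nz. }
  rewrite sum_n_C_mult_r, <- symsum_eq. unfold symsum.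
  rewrite (sum_n_C_ext_loc _ (fun k => / Cpow q n * (Cpow q k / (qpoch p p k * qpoch p p (2 * n - k))))).
  2:{ intros k Hk. unfold chi3. rewrite zpow_nat_sub by exact Hq0.
      destruct (le_lt_dec k n) as [H|H].
      - replace (Z.abs_nat (Z.of_nat k - Z.of_nat n)) with (n - k)%nat by lia.
        replace (n - (n - k))%nat with k by lia. replace (n + (n - k))%nat with (2 * n - k)%nat by lia.
        field. repeat split; auto using qpp_nz, Cpow_nz.
      - replace (Z.abs_nat (Z.of_nat k - Z.of_nat n)) with (k - n)%nat by lia.
        replace (n - (k - n))%nat with (2 * n - k)%nat by lia. replace (n + (k - n))%nat with k by lia.
        field. repeat split; auto using qpp_nz, Cpow_nz. }
  rewrite sum_n_C_mult_l, E_id. rewrite Cpow_inv by exact Hq0. fold b.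
  field. repeat split; auto using qqq_nz, Cpow_nz.
Qed.
End FI.


Lemma Cinv_neq_0 (x : C) : x <> 0 -> / x <> 0.
Proof. intros H E. apply C1_nz. rewrite <- (Cinv_r x H), E. ring. Qed.

Lemma zpow_bound (q : C) (e : Z) (r : nat) : q <> 0 -> (Cmod q <= 1)%R -> (- Z.of_nat r <= e)%Z ->
  (Cmod (zpow q e) <= / Cmod q ^ r)%R.
Proof.
  intros Hq Hq1 He.
  replace e with (Z.of_nat (Z.to_nat (e + Z.of_nat r)) - Z.of_nat r)%Z by lia.
  rewrite zpow_nat_sub by exact Hq. rewrite Cmod_div by (apply Cpow_nz, Hq). rewrite !Cmod_pow.
  unfold Rdiv. rewrite Rmult_comm. rewrite <- (Rmult_1_r (/ Cmod q ^ r)) at 2.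
  apply Rmult_le_compat_l. left. apply Rinv_0_lt_compat, pow_lt, Cmod_gt_0, Hq.
  apply pow_le_1. split. apply Cmod_ge_0. exact Hq1.
Qed.

Lemma alpha_bound (q : C) r : q <> 0 -> (Cmod q <= 1)%R ->
  (Cmod (alpha q r) <= INR (S (2 * r)) * / Cmod q ^ r)%R.
Proof.
  intros Hq Hq1. unfold alpha, symsum. eapply Rle_trans. apply Cmod_sum_le.
  rewrite <- sum_const_R. apply sum_n_R_le_loc. intros k Hk.
  apply zpow_bound; auto. nia.
Qed.

Section Main.
Variables q a c : C.
Hypothesis Hq : (0 < Cmod q)%R.
Hypothesis Hq1 : (Cmod q < 1)%R.
Hypothesis Ha : a <> 0.
Hypothesis Hc : c <> 0.
Hypothesis Hpa : forall n : nat, qpoch (q^2 * a) (q^2) n <> 0.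
Hypothesis Hpc : forall n : nat, qpoch (q^2 * c) (q^2) n <> 0.
Hypothesis Hs : (Cmod (a * c / q) < 1)%R.

Let p := Cpow q 2.
Let X := p / a.
Let Y := p / c.
Let z := a * c.

Lemma Hq0 : q <> 0.
Proof. intro E. rewrite E, Cmod_0 in Hq. lra. Qed.

Lemma Hp1' : (Cmod p < 1)%R.
Proof. unfold p. rewrite Cmod_pow. pose proof (Cmod_ge_0 q). simpl. nra. Qed.

Lemma Hp0' : p <> 0.
Proof. unfold p. apply Cpow_nz, Hq0. Qed.

Lemma Hz_lt : (Cmod z <= Cmod (a * c / q))%R.
Proof.
  unfold z. rewrite Cmod_div by apply Hq0.
  pose proof (Cmod_ge_0 (a * c)).
  unfold Rdiv. rewrite <- (Rmult_1_r (Cmod (a * c))) at 1. apply Rmult_le_compat_l. lra.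
  rewrite <- Rinv_1. apply Rinv_le_contravar. exact Hq. lra.
Qed.

Lemma Hz1 : (Cmod z < 1)%R.
Proof. pose proof Hz_lt. lra. Qed.

Definition gg n := qpoch X p n * qpoch Y p n * Cpow z n.
Definition DD n := qpoch (p * a) p n * qpoch (p * c) p n.
Definition QQ := qpinf (p * a) p * qpinf (p * c) p / (qpinf p p * qpinf z p).

Lemma DD_nz n : DD n <> 0.
Proof. unfold DD. apply Cmult_neq_0. apply Hpa. apply Hpc. Qed.

Lemma rhs_eq n : rhs_term q a c n = alpha q n * ((1 - Cpow q (2 * n + 1)) * gg n / DD n).
Proof.
  unfold rhs_term, alpha, symsum. rewrite <- sum_n_C_mult_r. apply sum_n_C_ext. intro k.
  cbv zeta. unfold gg, DD, X, Y, z, p. unfold Cdiv. ring.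
Qed.

Lemma lhs_eq n : lhs_term q a c n = gg n * (Cpow (/ q) n / (qpoch q q (2 * n) * (1 + Cpow q (2 * n + 1)))).
Proof.
  unfold lhs_term, gg, X, Y, z, p. replace (a * c / q) with (a * c * / q) by reflexivity.
  rewrite Cpow_mult_l. unfold Cdiv. ring.
Qed.

Lemma Cpow_p_nz k : Cpow p k <> 0.
Proof. apply Cpow_nz, Hp0'. Qed.

Lemma Cmod_p_pow_lt k : (Cmod (p * Cpow p k) < 1)%R.
Proof.
  rewrite Cmod_mult, Cmod_pow. pose proof Hp1'. pose proof (Cmod_ge_0 p).
  pose proof (pow_le_1 (Cmod p) k ltac:(lra)). nra.
Qed.

Lemma inner r : is_series (fun m => gg (m + r) * gam q (m + r) r) (gg r * QQ / DD r).
Proof.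
  set (A := X * Cpow p r). set (B := Y * Cpow p r). set (Cc := p * Cpow p (2 * r + 1)).
  assert (Epr : Cpow p (2 * r + 1) = Cpow p r * Cpow p r * p).
  { replace (2 * r + 1)%nat with (r + r + 1)%nat by lia. rewrite !Cpow_add_r, Cpow_1_r. reflexivity. }
  assert (Hpr := Cpow_p_nz r). assert (Hp0 := Hp0').
  assert (HA : A <> 0) by (unfold A, X; apply Cmult_neq_0; [|exact Hpr]; unfold Cdiv; apply Cmult_neq_0; [exact Hp0 | apply Cinv_neq_0; exact Ha]).
  assert (HB : B <> 0) by (unfold B, Y; apply Cmult_neq_0; [|exact Hpr]; unfold Cdiv; apply Cmult_neq_0; [exact Hp0 | apply Cinv_neq_0; exact Hc]).
  assert (EA : Cc / A = p * a * Cpow p r).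
  { unfold Cc, A, X. rewrite Epr. field. repeat split; auto. }
  assert (EB : Cc / B = p * c * Cpow p r).
  { unfold Cc, B, Y. rewrite Epr. field. repeat split; auto. }
  assert (Ez : Cc / (A * B) = z).
  { unfold Cc, A, B, X, Y, z. rewrite Epr. field. repeat split; auto. }
  assert (HCc : (Cmod Cc < 1)%R) by apply Cmod_p_pow_lt.
  assert (HCz : (Cmod (Cc / (A * B)) < 1)%R) by (rewrite Ez; apply Hz1).
  assert (G := qgauss A B p Hp1' HA HB Cc HCc HCz).
  assert (G' := series_scal (gg r / qpoch p p (2 * r + 1)) _ _ G).
  assert (Et : forall m, gg r / qpoch p p (2 * r + 1) * tG A B p Cc m = gg (m + r) * gam q (m + r) r).
  { intro m. symmetry.
      unfold gg. rewrite (Nat.add_comm m r), (qpoch_split X p r m), (qpoch_split Y p r m), Cpow_add_r.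
      unfold gam. cbv zeta. fold p.
      replace (r + m - r)%nat with m by lia.
      replace (r + m + r + 1)%nat with ((2 * r + 1) + m)%nat by lia.
      rewrite (qpoch_split p p (2 * r + 1) m). unfold tG. rewrite Ez. fold A B Cc.
      assert (H1 := qp_nz_small p p m Hp1' Hp1').
      assert (H2 := qp_nz_small Cc p m HCc Hp1').
      assert (H3 := qp_nz_small p p (2 * r + 1) Hp1' Hp1').
      field. repeat split; auto. }
  apply (series_ext _ _ _ Et) in G'.
  replace (gg r * QQ / DD r) with
    (gg r / qpoch p p (2 * r + 1) * (qpinf (Cc / A) p * qpinf (Cc / B) p / (qpinf Cc p * qpinf (Cc / (A * B)) p))).
  exact G'.
  rewrite EA, EB, Ez. unfold QQ, DD.
  rewrite (qpinf_split (p * a) p r Hp1'), (qpinf_split (p * c) p r Hp1'), (qpinf_split p p (2 * r + 1) Hp1').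
  fold Cc.
  assert (N1 : qpinf Cc p <> 0) by (apply qpinf_nz; [exact Hp1' | intro n; apply qp_nz_small; [exact HCc | exact Hp1']]).
  assert (N2 : qpinf z p <> 0) by (apply qpinf_nz; [exact Hp1' | intro n; apply qp_nz_small; [exact Hz1 | exact Hp1']]).
  assert (N3 := qp_nz_small p p (2 * r + 1) Hp1' Hp1').
  assert (N4 := Hpa r). assert (N5 := Hpc r). fold p in N4, N5.
  field. repeat split; auto.
Qed.

Let sR := Cmod (a * c / q).

Lemma Hz_eq : Cmod z = (sR * Cmod q)%R.
Proof. unfold sR, z. rewrite Cmod_div by apply Hq0. field. lra. Qed.

Lemma core_bound Cst tau : (forall n, INR (S n) * sR ^ n <= Cst * tau ^ n)%R ->
  forall r, (INR (S (2 * r)) * / Cmod q ^ r * Cmod z ^ r <= 2 * Cst * tau ^ r)%R.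
Proof.
  intros Hb r. rewrite Hz_eq, Rpow_mult_distr.
  replace (INR (S (2 * r)) * / Cmod q ^ r * (sR ^ r * Cmod q ^ r))%R with (INR (S (2 * r)) * sR ^ r)%R
    by (field; apply pow_nonzero; lra).
  specialize (Hb r).
  assert (INR (S (2 * r)) <= 2 * INR (S r))%R.
  { replace (INR (S (2 * r))) with (2 * INR r + 1)%R by (rewrite S_INR, mult_INR; simpl; ring).
    rewrite S_INR. pose proof (pos_INR r). lra. }
  assert (0 <= sR ^ r)%R by (apply pow_le, Cmod_ge_0).
  nra.
Qed.

Lemma Cmod_1m_pow k : (Cmod (1 - Cpow q k) <= 2)%R.
Proof.
  eapply Rle_trans. apply Cmod_1_minus_le. rewrite Cmod_pow.
  pose proof (pow_le_1 (Cmod q) k ltac:(lra)). lra.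
Qed.

Lemma gg_bound n : (Cmod (gg n) <= exp (Cmod X / (1 - Cmod p)) * exp (Cmod Y / (1 - Cmod p)) * Cmod z ^ n)%R.
Proof.
  unfold gg. rewrite !Cmod_mult, Cmod_pow. apply Rmult_le_compat_r. apply pow_le, Cmod_ge_0.
  apply Rmult_le_compat; try apply Cmod_ge_0; apply qp_upper, Hp1'.
Qed.

Definition ff r m := (1 - Cpow q (2 * r + 1)) * alpha q r * (gg (m + r) * gam q (m + r) r).

Lemma gam_bound Lp : (0 < Lp)%R -> (forall n, Lp <= Cmod (qpoch p p n))%R ->
  forall n r, (Cmod (gam q n r) <= / (Lp * Lp))%R.
Proof.
  intros HL H n r. unfold gam. cbv zeta. fold p.
  assert (H1 := H (n - r)%nat). assert (H2 := H (n + r + 1)%nat).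
  rewrite Cmod_inv, Cmod_mult. apply Rinv_le_contravar. nra.
  apply Rmult_le_compat; lra.
  apply Cmult_neq_0; intro E; [specialize (H (n - r)%nat) | specialize (H (n + r + 1)%nat)];
    rewrite E, Cmod_0 in H; lra.
Qed.

Lemma main_result : exists S T : C,
    is_series (lhs_term q a c) S /\
    is_series (rhs_term q a c) T /\
    qpinf (q^2) (q^2) * qpinf (a * c) (q^2)
      / (qpinf (q^2 * a) (q^2) * qpinf (q^2 * c) (q^2)) * S = T.
Proof.
  assert (HsR : (0 <= sR < 1)%R) by (split; [apply Cmod_ge_0 | exact Hs]).
  destruct (poly_geom sR HsR) as [Cst [tau [HCst [Htau Hb]]]].
  assert (Hcore := core_bound Cst tau Hb).
  destruct (qp_lower p p Hp1') as [Lp [HLp HLp']].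
  { intro n. apply qp_nz_small; apply Hp1'. }
  destruct (qp_lower (p * a) p Hp1' Hpa) as [La [HLa HLa']].
  destruct (qp_lower (p * c) p Hp1' Hpc) as [Lc [HLc HLc']].
  set (UX := exp (Cmod X / (1 - Cmod p))). set (UY := exp (Cmod Y / (1 - Cmod p))).
  assert (HUX : (0 < UX)%R) by apply exp_pos. assert (HUY : (0 < UY)%R) by apply exp_pos.
  pose proof (Cmod_ge_0 z) as Hz0. pose proof Hz_lt as Hzs. fold sR in Hzs.
  assert (Hq0' : (0 < Cmod q ^ 0)%R) by (simpl; lra).
  destruct (ex_series_maj (rhs_term q a c) (fun r => (2 * UX * UY / (La * Lc)) * (2 * Cst) * tau ^ r)%R)
    as [T HT].
  { intro r. rewrite rhs_eq, Cmod_mult.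
    unfold Cdiv. rewrite !Cmod_mult, Cmod_inv by apply DD_nz.
    assert (E1 := alpha_bound q r Hq0 ltac:(lra)).
    assert (E2 := Cmod_1m_pow (2 * r + 1)).
    assert (E3 := gg_bound r). fold UX UY in E3.
    assert (E4 : (/ Cmod (DD r) <= / (La * Lc))%R).
    { unfold DD. rewrite Cmod_mult. apply Rinv_le_contravar. nra.
      apply Rmult_le_compat; try lra. apply HLa'. apply HLc'. }
    specialize (Hcore r).
    assert (0 < / Cmod q ^ r)%R by (apply Rinv_0_lt_compat, pow_lt; lra).
    set (A1 := Cmod (alpha q r)) in *. set (A2 := Cmod (1 - Cpow q (2 * r + 1))) in *.
    set (A3 := Cmod (gg r)) in *. set (A4 := (/ Cmod (DD r))%R) in *.
    assert (0 <= A1)%R by apply Cmod_ge_0. assert (0 <= A2)%R by apply Cmod_ge_0.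
    assert (0 <= A3)%R by apply Cmod_ge_0. assert (0 <= A4)%R by (apply Rlt_le, Rinv_0_lt_compat, Cmod_gt_0, DD_nz).
    apply Rle_trans with (INR (S (2 * r)) * / Cmod q ^ r * (2 * (UX * UY * Cmod z ^ r) * / (La * Lc)))%R.
    { apply Rmult_le_compat; try lra. apply Rmult_le_pos; [apply Rmult_le_pos|]; lra.
      apply Rmult_le_compat; try lra. apply Rmult_le_pos; lra.
      apply Rmult_le_compat; lra. }
    replace (INR (S (2 * r)) * / Cmod q ^ r * (2 * (UX * UY * Cmod z ^ r) * / (La * Lc)))%R
      with ((2 * UX * UY / (La * Lc)) * (INR (S (2 * r)) * / Cmod q ^ r * Cmod z ^ r))%R by (unfold Rdiv; ring).
    rewrite (Rmult_assoc (2 * UX * UY / (La * Lc))). apply Rmult_le_compat_l. apply Rdiv_le_0_compat; nra. exact Hcore. }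
  { apply ex_series_geomK. lra. }
  set (FF := fun r => (1 - Cpow q (2 * r + 1)) * alpha q r * (gg r * QQ / DD r)).
  assert (HF : forall r, is_series (ff r) (FF r)).
  { intro r. apply series_scal, inner. }
  assert (HU : is_series FF (QQ * T)).
  { apply (series_ext (fun r => QQ * rhs_term q a c r)).
    intro r. unfold FF. rewrite rhs_eq. unfold Cdiv. ring.
    apply series_scal, HT. }
  assert (HI : is_series (fun n => sum_n (fun r => ff r (n - r)%nat) n) (QQ * T)).
  { apply interchange with (K := (2 * (UX * UY) * / (Lp * Lp) * (2 * Cst))%R) (tau := tau) (F := FF).
    - apply Rmult_le_pos; [|lra]. apply Rmult_le_pos. nra. left; apply Rinv_0_lt_compat; nra.
    - split; lra.
    - intros r m. unfold ff. rewrite !Cmod_mult.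
      assert (E1 := alpha_bound q r Hq0 ltac:(lra)).
      assert (E2 := Cmod_1m_pow (2 * r + 1)).
      assert (E3 := gg_bound (m + r)). fold UX UY in E3.
      assert (E4 := gam_bound Lp HLp HLp' (m + r) r).
      specialize (Hcore r).
      assert (0 < / Cmod q ^ r)%R by (apply Rinv_0_lt_compat, pow_lt; lra).
      assert (Hzm : (Cmod z ^ m <= tau ^ m)%R) by (apply pow_incr; lra).
      set (A1 := Cmod (alpha q r)) in *. set (A2 := Cmod (1 - Cpow q (2 * r + 1))) in *.
      set (A3 := Cmod (gg (m + r))) in *. set (A4 := Cmod (gam q (m + r) r)) in *.
      assert (0 <= A1)%R by apply Cmod_ge_0. assert (0 <= A2)%R by apply Cmod_ge_0.
      assert (0 <= A3)%R by apply Cmod_ge_0. assert (0 <= A4)%R by apply Cmod_ge_0.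
      assert (0 < / (Lp * Lp))%R by (apply Rinv_0_lt_compat; nra).
      apply Rle_trans with ((2 * (INR (S (2 * r)) * / Cmod q ^ r)) * ((UX * UY * Cmod z ^ (m + r)) * / (Lp * Lp)))%R.
      { assert (0 <= INR (S (2 * r)) * / Cmod q ^ r)%R by (apply Rmult_le_pos; [apply pos_INR | lra]).
        apply Rmult_le_compat. nra. nra. apply Rmult_le_compat; lra. apply Rmult_le_compat; lra. }
      apply Rle_trans with ((2 * (UX * UY) * / (Lp * Lp)) * ((INR (S (2 * r)) * / Cmod q ^ r * Cmod z ^ r) * Cmod z ^ m))%R.
      { right. rewrite pow_add. ring. }
      apply Rle_trans with ((2 * (UX * UY) * / (Lp * Lp)) * ((2 * Cst * tau ^ r) * tau ^ m))%R.
      2:{ right. rewrite pow_add. ring. }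
      apply Rmult_le_compat_l. apply Rmult_le_pos. nra. lra.
      apply Rmult_le_compat; try lra.
      apply Rmult_le_pos; [apply Rmult_le_pos|]. apply pos_INR. lra. apply pow_le; lra.
      apply pow_le; lra.
    - exact HF.
    - exact HU. }
  exists (QQ * T), T. split; [|split].
  - assert (Ed : forall n, @eq C (sum_n (fun r => ff r (n - r)%nat) n) (lhs_term q a c n)).
    { intro n. rewrite lhs_eq.
      rewrite (sum_n_C_ext_loc _ (fun r => (1 - Cpow q (2 * r + 1)) * alpha q r * gam q n r * gg n)).
      2:{ intros r Hr. unfold ff. replace (n - r + r)%nat with n by lia. ring. }
      rewrite sum_n_C_mult_r, (FI q Hq0 Hq1 n). ring. }
    exact (series_ext _ _ _ Ed HI).
  - exact HT.
  - unfold QQ. fold p. fold z.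
    assert (N1 : qpinf p p <> 0) by (apply qpinf_nz; [exact Hp1' | intro n; apply qp_nz_small; apply Hp1']).
    assert (N2 : qpinf z p <> 0) by (apply qpinf_nz; [exact Hp1' | intro n; apply qp_nz_small; [exact Hz1 | exact Hp1']]).
    assert (N3 : qpinf (p * a) p <> 0) by (apply qpinf_nz; [exact Hp1' | exact Hpa]).
    assert (N4 : qpinf (p * c) p <> 0) by (apply qpinf_nz; [exact Hp1' | exact Hpc]).
    field. repeat split; auto.
Qed.
End Main.


Theorem theorem8p4 (q a c : C) :
  (0 < Cmod q)%R -> (Cmod q < 1)%R ->
  a <> 0 -> c <> 0 ->
  (forall n : nat, qpoch (q^2 * a) (q^2) n <> 0) ->
  (forall n : nat, qpoch (q^2 * c) (q^2) n <> 0) ->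
  (Cmod (a * c / q) < 1)%R ->
  exists S T : C,
    is_series (lhs_term q a c) S /\
    is_series (rhs_term q a c) T /\
    qpinf (q^2) (q^2) * qpinf (a * c) (q^2)
      / (qpinf (q^2 * a) (q^2) * qpinf (q^2 * c) (q^2)) * S = T.
Proof.
  intros Hq Hq1 Ha Hc Hpa Hpc Hs.
  exact (main_result q a c Hq Hq1 Ha Hc Hpa Hpc Hs).
Qed.
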